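(* Let $G$ be the $m\times n$ triangle lattice tube graph with $n\ge 4$ and $m\ge 3$. Then $T_1(G)=2$.
   Context: The $m\times n$ triangular lattice graph is $P_m\times P_n$ (Cartesian product of paths; vertices are integer points $(i,j)$, $1\le i\le n$, $1\le j\le m$) together with the diagonal edges joining $(i,j)$ and $(i+1,j+1)$. The $m\times n$ triangle lattice tube graph is obtained from it by identifying, in each of the $m$ rows, the first vertex $(1,j)$ with the last vertex $(n,j)$ (so the lattice wraps into a tube; equivalently its vertex set is $\mathbb{Z}_{n-1}\times\{1,\dots,m\}$ with edges $(i,j)(i+1,j)$, $(i,j)(i,j+1)$, $(i,j)(i+1,j+1)$). Fix a set $\Sigma$ of symbols (bond-edge types) and a disjoint copy $\hat\Sigma=\{\hat a:a\in\Sigma\}$ with $\hat{\hat a}=a$; elements of $\Sigma\cup\hat\Sigma$ are cohesive-end types. A tile is a finite multiset of cohesive-end types. A pot is a finite set $P$ of tiles such that whenever $x$ occurs in a tile of $P$, $\hat x$ occurs in some tile of $P$; $\#P$ is its number of tiles. Graphs are finite, loops and multiple edges allowed. An assembly design of a graph $H$ labels the half-edges of $H$ by cohesive-end types so that the two half-edges of each edge receive complementary labels $x,\hat x$; $t_v$ is the multiset of labels at $v$, $P_\lambda(H)=\{t_v\}$, and $P$ realizes $H$ ($H\in\mathcal{O}(P)$) if some assembly design $\lambda$ has $P_\lambda(H)\subseteq P$. $T_1(G)=\min\{\#P: G\in\mathcal{O}(P)\}$. *)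

(* Defs.v *)
From mathcomp Require Import all_boot.
Set Implicit Arguments. Unset Strict Implicit. Unset Printing Implicit Defensive.

(* Bond-edge types Sigma := nat.  A cohesive-end type is (a, false) = a or
   (a, true) = \hat a. *)
Definition cend := (nat * bool)%type.
Definition hat (x : cend) : cend := (x.1, ~~ x.2).

(* A tile is a finite multiset of cohesive-end types, represented by a
   sequence up to permutation (perm_eq). *)
Definition tile := seq cend.

Definition is_pot (P : seq tile) : Prop :=
  pairwise (fun t1 t2 => ~~ perm_eq t1 t2) P /\
  (forall t x, t \in P -> x \in t -> exists2 t', t' \in P & hat x \in t').

(* A finite graph (loops and multiple edges allowed): a duplicate-free list of
   vertices and a list of edges (each edge a pair of endpoints, so
   multiplicities are recorded). *)
Record graph (V : eqType) := Graph { verts : seq V; edges : seq (V * V) }.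

Definition is_graph (V : eqType) (G : graph V) : Prop :=
  uniq (verts G) /\ all (fun e => (e.1 \in verts G) && (e.2 \in verts G)) (edges G).

(* Assembly design: a list lam of labels, one per edge; the edge (u,w) with
   label x gets x on its half-edge at u and hat x on its half-edge at w.
   tile_at lam v is the multiset t_v of labels of half-edges at v. *)
Definition tile_at (V : eqType) (G : graph V) (lam : seq cend) (v : V) : tile :=
  flatten [seq (if p.1.1 == v then [:: p.2] else [::]) ++
               (if p.1.2 == v then [:: hat p.2] else [::])
          | p <- zip (edges G) lam].

Definition realizes (V : eqType) (P : seq tile) (G : graph V) : Prop :=
  exists lam : seq cend, size lam = size (edges G) /\
    forall v, v \in verts G -> has (perm_eq (tile_at G lam v)) P.

Definition T1_is (V : eqType) (G : graph V) (k : nat) : Prop :=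
  (exists P, is_pot P /\ size P = k /\ realizes P G) /\
  (forall P, is_pot P -> realizes P G -> k <= size P).

(* m x n triangle lattice tube: vertices Z_(n-1) x {0..m-1} (0-indexed),
   edges (i,j)(i+1,j), (i,j)(i,j+1), (i,j)(i+1,j+1), indices i mod n-1. *)
Definition tube (m n : nat) : graph (nat * nat)%type :=
  Graph [seq (i, j) | i <- iota 0 n.-1, j <- iota 0 m]
    ([seq ((i, j), ((i.+1 %% n.-1), j)) | i <- iota 0 n.-1, j <- iota 0 m] ++
     [seq ((i, j), (i, j.+1)) | i <- iota 0 n.-1, j <- iota 0 m.-1] ++
     [seq ((i, j), ((i.+1 %% n.-1), j.+1)) | i <- iota 0 n.-1, j <- iota 0 m.-1]).

(* Main.v *)
Require Import Defs.
From mathcomp Require Import all_boot.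
From mathcomp Require Import zify.

Definition E3 := seq ((nat * nat) * (nat * nat))%type.

Lemma count_tile (G : graph (nat*nat)%type) lam v (p : pred cend) :
  count p (tile_at G lam v) =
  sumn [seq ((q.1.1 == v) && p q.2) + ((q.1.2 == v) && p (hat q.2)) | q <- zip (edges G) lam].
Proof.
rewrite /tile_at count_flatten -map_comp; congr sumn; apply: eq_map => q /=.
rewrite count_cat; case: (q.1.1 == v); case: (q.1.2 == v) => //=; rewrite ?addn0 //.
Qed.

Lemma sum_blk (E : E3) (l : cend) v (p : pred cend) :
  sumn [seq ((q.1.1 == v) && p q.2) + ((q.1.2 == v) && p (hat q.2)) | q <- zip E (nseq (size E) l)]
  = count (fun e => e.1 == v) E * p l + count (fun e => e.2 == v) E * p (hat l).
Proof.
elim: E => //= e E ->.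
case: (e.1 == v); case: (e.2 == v); case: (p l); case: (p (hat l)) => /=; lia.
Qed.

Lemma size_tile (G : graph (nat*nat)%type) lam v : size lam = size (edges G) ->
  size (tile_at G lam v) = count (fun e => e.1 == v) (edges G) + count (fun e => e.2 == v) (edges G).
Proof.
move=> hs; rewrite -count_predT count_tile.
have -> : [seq ((q.1.1 == v) && predT q.2) + ((q.1.2 == v) && predT (hat q.2)) | q <- zip (edges G) lam]
  = [seq (e.1 == v) + (e.2 == v) | e <- unzip1 (zip (edges G) lam)].
  by rewrite -map_comp; apply: eq_map => q /=; rewrite !andbT.
rewrite unzip1_zip ?hs //.
elim: (edges G) => //= e E ->; lia.
Qed.

Lemma cnt_ap (F : nat -> nat -> (nat*nat)%type) s t v : uniq s -> uniq t ->
  (forall x y x' y', x \in s -> y \in t -> x' \in s -> y' \in t -> F x y = F x' y' -> x = x' /\ y = y') ->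
  count_mem v [seq F x y | x <- s, y <- t] = (v \in [seq F x y | x <- s, y <- t]).
Proof.
move=> us ut inj; apply: count_uniq_mem; apply: allpairs_uniq => //.
move=> [x y] [x' y'] /allpairsP [[a b] [/= ha hb [-> ->]]] /allpairsP [[a' b'] [/= ha' hb' [-> ->]]] /=.
by move=> /(inj _ _ _ _ ha hb ha' hb') [-> ->].
Qed.

Lemma smod x N : x < N -> x.+1 %% N = if x.+1 == N then 0 else x.+1.
Proof. by move=> h; case: eqP => [->|ne]; [apply: modnn | apply: modn_small; lia]. Qed.

Lemma cnt1 (F G : nat -> nat -> (nat*nat)%type) s t v : uniq s -> uniq t ->
  (forall x y x' y', x \in s -> y \in t -> x' \in s -> y' \in t -> F x y = F x' y' -> x = x' /\ y = y') ->
  count (fun e => e.1 == v) [seq (F x y, G x y) | x <- s, y <- t] = (v \in [seq F x y | x <- s, y <- t]).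
Proof.
move=> us ut inj.
have -> : count (fun e => e.1 == v) [seq (F x y, G x y) | x <- s, y <- t]
   = count_mem v (map fst [seq (F x y, G x y) | x <- s, y <- t]).
  by rewrite count_map; apply: eq_count => e /=; rewrite eq_sym.
by rewrite map_allpairs /=; apply: cnt_ap.
Qed.

Lemma cnt2 (F G : nat -> nat -> (nat*nat)%type) s t v : uniq s -> uniq t ->
  (forall x y x' y', x \in s -> y \in t -> x' \in s -> y' \in t -> G x y = G x' y' -> x = x' /\ y = y') ->
  count (fun e => e.2 == v) [seq (F x y, G x y) | x <- s, y <- t] = (v \in [seq G x y | x <- s, y <- t]).
Proof.
move=> us ut inj.
have -> : count (fun e => e.2 == v) [seq (F x y, G x y) | x <- s, y <- t]
   = count_mem v (map snd [seq (F x y, G x y) | x <- s, y <- t]).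
  by rewrite count_map; apply: eq_count => e /=; rewrite eq_sym.
by rewrite map_allpairs /=; apply: cnt_ap.
Qed.

Section Counts.
Variables (N M i j : nat).
Hypotheses (hN : 0 < N) (hi : i < N) (hj : j < M).

Lemma cH1 : count (fun e => e.1 == (i,j)) [seq ((x, y), ((x.+1 %% N), y)) | x <- iota 0 N, y <- iota 0 M] = 1.
Proof.
rewrite (cnt1 (fun x y => (x, y)) (fun x y => (x.+1 %% N, y))) ?iota_uniq //.
  match goal with |- nat_of_bool ?b = _ => suff ->: b by [] end.
  by apply/allpairsP; exists (i, j); rewrite /= !mem_iota; split => //; lia.
by move=> x y x' y' _ _ _ _ [-> ->].
Qed.

Lemma cH2 : count (fun e => e.2 == (i,j)) [seq ((x, y), ((x.+1 %% N), y)) | x <- iota 0 N, y <- iota 0 M] = 1.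
Proof.
rewrite (cnt2 (fun x y => (x, y)) (fun x y => (x.+1 %% N, y))) ?iota_uniq //.
  match goal with |- nat_of_bool ?b = _ => suff ->: b by [] end.
  apply/allpairsP; exists (if i == 0 then N.-1 else i.-1, j); rewrite /= !mem_iota; split => //.
  - case: eqP => _; lia.
  - rewrite smod; last by case: eqP => _; lia.
    congr pair; case: (i =P 0) => [->|ne]; case: eqP => //; lia.
move=> x y x' y'; rewrite !mem_iota => hx _ hx' _ [].
rewrite !smod; try lia.
move=> h ->; split => //; move: h; case: eqP => a; case: eqP => b; lia.
Qed.
End Counts.

Section Counts2.
Variables (N M i j : nat).
Hypotheses (hN : 0 < N) (hi : i < N) (hj : j < M).

Lemma cV1 : count (fun e => e.1 == (i,j)) [seq ((x, y), (x, y.+1)) | x <- iota 0 N, y <- iota 0 M.-1] = (j < M.-1).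
Proof.
rewrite (cnt1 (fun x y => (x, y)) (fun x y => (x, y.+1))) ?iota_uniq //; last first.
  by move=> x y x' y' _ _ _ _ [-> ->].
congr nat_of_bool; apply/idP/idP => [/allpairsP [[x y] [/= hx hy [ei ej]]] | h].
  by rewrite mem_iota in hy; lia.
by apply/allpairsP; exists (i, j); rewrite /= !mem_iota; split => //; lia.
Qed.

Lemma cV2 : count (fun e => e.2 == (i,j)) [seq ((x, y), (x, y.+1)) | x <- iota 0 N, y <- iota 0 M.-1] = (0 < j).
Proof.
rewrite (cnt2 (fun x y => (x, y)) (fun x y => (x, y.+1))) ?iota_uniq //; last first.
  by move=> x y x' y' _ _ _ _ [-> ->].
congr nat_of_bool; apply/idP/idP => [/allpairsP [[x y] [/= hx hy [ei ej]]] | h].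
  lia.
apply/allpairsP; exists (i, j.-1); rewrite /= !mem_iota; split; try lia.
congr pair; lia.
Qed.

Lemma cD1 : count (fun e => e.1 == (i,j)) [seq ((x, y), (x.+1 %% N, y.+1)) | x <- iota 0 N, y <- iota 0 M.-1] = (j < M.-1).
Proof.
rewrite (cnt1 (fun x y => (x, y)) (fun x y => (x.+1 %% N, y.+1))) ?iota_uniq //; last first.
  by move=> x y x' y' _ _ _ _ [-> ->].
congr nat_of_bool; apply/idP/idP => [/allpairsP [[x y] [/= hx hy [ei ej]]] | h].
  by rewrite mem_iota in hy; lia.
by apply/allpairsP; exists (i, j); rewrite /= !mem_iota; split => //; lia.
Qed.

Lemma cD2 : count (fun e => e.2 == (i,j)) [seq ((x, y), (x.+1 %% N, y.+1)) | x <- iota 0 N, y <- iota 0 M.-1] = (0 < j).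
Proof.
rewrite (cnt2 (fun x y => (x, y)) (fun x y => (x.+1 %% N, y.+1))) ?iota_uniq //; last first.
  move=> x y x' y'; rewrite !mem_iota => hx _ hx' _ [].
  rewrite !smod; try lia.
  move=> h [->]; split => //; move: h; case: eqP => a; case: eqP => b; lia.
congr nat_of_bool; apply/idP/idP => [/allpairsP [[x y] [/= hx hy [ei ej]]] | h].
  lia.
apply/allpairsP; exists (if i == 0 then N.-1 else i.-1, j.-1); rewrite /= !mem_iota; split.
- case: eqP => _; lia.
- lia.
- rewrite smod; last by case: eqP => _; lia.
  congr pair; last by lia.
  case: (i =P 0) => [->|ne]; case: eqP => //; lia.
Qed.
End Counts2.

Definition Hs m n : E3 := [seq ((i, j), ((i.+1 %% n.-1), j)) | i <- iota 0 n.-1, j <- iota 0 m].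
Definition Vs m n : E3 := [seq ((i, j), (i, j.+1)) | i <- iota 0 n.-1, j <- iota 0 m.-1].
Definition Ds m n : E3 := [seq ((i, j), ((i.+1 %% n.-1), j.+1)) | i <- iota 0 n.-1, j <- iota 0 m.-1].

Lemma edges_tube m n : edges (tube m n) = Hs m n ++ Vs m n ++ Ds m n.
Proof. by []. Qed.

Lemma deg m n lam i j : 0 < n.-1 -> i < n.-1 -> j < m -> size lam = size (edges (tube m n)) ->
  size (tile_at (tube m n) lam (i,j)) = 2 + 2 * ((j < m.-1) + (0 < j)).
Proof.
move=> hN hi hj hs; rewrite size_tile // edges_tube !count_cat.
rewrite /Hs /Vs /Ds cH1 // cH2 // cV1 // cV2 // cD1 // cD2 //; lia.
Qed.

Definition ca : cend := (0, false).
Definition lamT m n := nseq (size (Hs m n)) ca ++ nseq (size (Vs m n)) ca ++ nseq (size (Ds m n)) (hat ca).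

Lemma cnt_T m n i j x : 0 < n.-1 -> i < n.-1 -> j < m ->
  count_mem x (tile_at (tube m n) (lamT m n) (i,j)) =
  (pred1 x ca) * (1 + (j < m.-1) + (0 < j)) + (pred1 x (hat ca)) * (1 + (j < m.-1) + (0 < j)).
Proof.
move=> hN hi hj; rewrite count_tile edges_tube /lamT.
rewrite !zip_cat ?size_nseq // !map_cat !sumn_cat !sum_blk.
rewrite /Hs /Vs /Ds cH1 // cH2 // cV1 // cV2 // cD1 // cD2 //.
have -> : hat (hat ca) = ca by [].
case: (pred1 x ca); case: (pred1 x (hat ca)); case: (j < m.-1); case: (0 < j); lia.
Qed.

Lemma permT m n i j : 0 < n.-1 -> i < n.-1 -> j < m ->
  perm_eq (tile_at (tube m n) (lamT m n) (i,j))
    (nseq (1 + (j < m.-1) + (0 < j)) ca ++ nseq (1 + (j < m.-1) + (0 < j)) (hat ca)).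
Proof.
move=> hN hi hj; rewrite /perm_eq; apply/allP => x _; apply/eqP.
rewrite cnt_T // count_cat !count_nseq; lia.
Qed.


Theorem proposition8 (m n : nat) : 4 <= n -> 3 <= m -> T1_is (tube m n) 2.
Proof.
move=> hn hm; have hN : 0 < n.-1 by lia.
split.
- exists [:: nseq 2 ca ++ nseq 2 (hat ca); nseq 3 ca ++ nseq 3 (hat ca)]; split; [|split => //].
  + split; first by [].
    move=> t x ht hx; exists (nseq 2 ca ++ nseq 2 (hat ca)); first by rewrite inE eqxx.
    have : all (fun y => (y == ca) || (y == hat ca)) t.
      by move: ht; rewrite !inE => /orP [] /eqP ->.
    by move=> /allP /(_ x hx) /orP [] /eqP ->.
  + exists (lamT m n); split.
      by rewrite edges_tube /lamT !size_cat !size_nseq.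
    move=> v /allpairsP [[i j] [/= hi hj ->]]; rewrite !mem_iota !add0n in hi hj.
    have hp := @permT m n i j hN ltac:(lia) ltac:(lia).
    have : (j < m.-1) || (0 < j) by apply/orP; lia.
    case: (j < m.-1) hp; case: (0 < j) => hp _ //.
    * by apply/orP; right; apply/orP; left; exact: hp.
    * by apply/orP; left; exact: hp.
    * by apply/orP; left; exact: hp.
- move=> P hP [lam [hs hv]].
  have h0 : has (perm_eq (tile_at (tube m n) lam (0,0))) P.
    by apply: hv; apply/allpairsP; exists (0,0); rewrite /= !mem_iota; split => //; lia.
  have h1 : has (perm_eq (tile_at (tube m n) lam (0,1))) P.
    by apply: hv; apply/allpairsP; exists (0,1); rewrite /= !mem_iota; split => //; lia.
  have d0 := @deg m n lam 0 0 hN hN ltac:(lia) hs.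
  have d1 := @deg m n lam 0 1 hN hN ltac:(lia) hs.
  move: h0 h1 d0 d1.
  case: P {hP hv} => [|p [|q P]] //=; rewrite ?orbF.
  move=> /perm_size -> /perm_size -> a b.
  have e1 : (0 < m.-1) = true by apply/idP; lia.
  have e2 : (1 < m.-1) = true by apply/idP; lia.
  by rewrite a e1 e2 in b.
Qed.
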